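(* Let $\mathcal{F}$ be a finite set of graphs, let $T\ge0$, and let $G,H$ be graphs on $n$ vertices. Then $$\big\|\phi^{(T)}_{\mathsf{WLOA},\mathcal{F}}(G)-\phi^{(T)}_{\mathsf{WLOA},\mathcal{F}}(H)\big\|\ge\big\|\phi^{(T)}_{\mathsf{WLOA}}(G)-\phi^{(T)}_{\mathsf{WLOA}}(H)\big\|.$$
   Context: Graphs are finite, simple, undirected, unlabeled. $1$-WL: $C^1_0$ constant, $C^1_t(v)=\mathsf{RELABEL}(C^1_{t-1}(v),\{\!\{C^1_{t-1}(u):u\in N(v)\}\!\})$ with a fixed injective $\mathsf{RELABEL}$ shared by all graphs. $1$-WL$_{\mathcal{F}}$: same update with initial colour $(\ell_F(v))_{F\in\mathcal{F}}$, $\ell_F(v)=1$ if $v$ lies in some vertex set $X$ with induced subgraph $G[X]$ isomorphic to $F$, else $0$. Let $\Sigma_t$ (resp. $\Sigma^{\mathcal{F}}_t$) be the colours occurring at round $t$ in $G$ or $H$, and $\phi_t(G)_c$ (resp. $\phi_{\mathcal{F},t}(G)_c$) the number of vertices of $G$ of colour $c$ at round $t$. $\phi^{(T)}_{\mathsf{WLOA}}(G)$ is the $0/1$ vector with one coordinate for each $(t,c,j)$, $t\in\{0,\dots,T\}$, $c\in\Sigma_t$, $j\in\{1,\dots,n\}$, equal to $1$ iff $\phi_t(G)_c\ge j$; $\phi^{(T)}_{\mathsf{WLOA},\mathcal{F}}$ is defined likewise from the $1$-WL$_{\mathcal{F}}$ counts. $\|\cdot\|$ is the Euclidean norm. *)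

(* Defs.v *)
From HB Require Import structures.
From mathcomp Require Import all_boot all_order all_algebra.
Set Implicit Arguments. Unset Strict Implicit. Unset Printing Implicit Defensive.
Import Order.TTheory GRing.Theory Num.Theory.

Record graph := Graph {
  gsize : nat;
  gadj : rel 'I_gsize;
  gsym : symmetric gadj;
  girr : irreflexive gadj }.

(* ell_F(v): v lies in some vertex set X with G[X] isomorphic to F,
   i.e. there is an injective map f : V(F) -> V(G) with v in its image
   such that f is an isomorphism from F onto the induced subgraph G[f(V(F))]. *)
Definition ell (n : nat) (adj : rel 'I_n) (F : graph) (v : 'I_n) : bool :=
  [exists f : {ffun 'I_(gsize F) -> 'I_n},
     [&& injectiveb f, v \in codom f &
        [forall i, forall j, gadj i j == adj (f i) (f j)]]].

(* Colour refinement with initial colouring init and relabelling function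
   relabel (the multiset of neighbour colours is passed as a sequence;
   relabel is required to be injective on (colour, multiset) pairs). *)
Fixpoint wl (C : Type) (relabel : C -> seq C -> C) (n : nat)
    (adj : rel 'I_n) (init : 'I_n -> C) (t : nat) (v : 'I_n) : C :=
  match t with
  | 0 => init v
  | t'.+1 => relabel (wl relabel adj init t' v)
                     [seq wl relabel adj init t' u | u <- enum 'I_n & adj v u]
  end.

Definition relabel_injective (C : eqType) (relabel : C -> seq C -> C) :=
  forall c c' s s', (relabel c s == relabel c' s') = (c == c') && perm_eq s s'.

Definition wlF (C : Type) (emb : seq bool -> C) (relabel : C -> seq C -> C)
    (Fs : seq graph) (n : nat) (adj : rel 'I_n) (t : nat) (v : 'I_n) : C :=
  wl relabel adj (fun v => emb [seq ell adj F v | F <- Fs]) t v.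

Definition wl1 (C : Type) (c0 : C) (relabel : C -> seq C -> C)
    (n : nat) (adj : rel 'I_n) (t : nat) (v : 'I_n) : C :=
  wl relabel adj (fun _ => c0) t v.

Definition Sigma (C : eqType) (n : nat) (colG colH : nat -> 'I_n -> C) (t : nat)
  : seq C :=
  undup ([seq colG t v | v <- enum 'I_n] ++ [seq colH t v | v <- enum 'I_n]).

Definition phi_count (C : eqType) (n : nat) (col : nat -> 'I_n -> C) (t : nat) (c : C)
  : nat := #|[set v | col t v == c]|.

Definition wloa_index (C : eqType) (n : nat) (colG colH : nat -> 'I_n -> C) (T : nat)
  : seq (nat * C * nat) :=
  flatten [seq [seq (t, c, j) | c <- Sigma colG colH t, j <- iota 1 n] | t <- iota 0 T.+1].

Definition wloa (R : pzSemiRingType) (C : eqType) (n : nat) (col : nat -> 'I_n -> C)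
    (x : nat * C * nat) : R :=
  ((x.2 <= phi_count col x.1.1 x.1.2)%N)%:R.

Definition wloa_dist (R : rcfType) (C : eqType) (n : nat) (colG colH : nat -> 'I_n -> C)
    (T : nat) : R :=
  Num.sqrt (\sum_(x <- wloa_index colG colH T)
              (wloa R colG x - wloa R colH x) ^+ 2)%R.

(* Main.v *)
Require Import Defs.
From mathcomp Require Import all_boot all_order all_algebra.
From mathcomp Require Import zify.
Import Order.TTheory GRing.Theory Num.Theory.

Definition dst (a b : nat) : nat := ((a - b) + (b - a))%N.

Lemma factor (X : finType) (C : eqType) (f1 f2 : X -> C) :
  (forall x y, f1 x = f1 y -> f2 x = f2 y) ->
  exists g : C -> C, forall x, f2 x = g (f1 x).
Proof.
move=> H; exists (fun c => if [pick x | f1 x == c] is Some y then f2 y else c) => x.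
case: pickP => [y /eqP e|/(_ x)]; last by rewrite eqxx.
exact: H _ _ (esym e).
Qed.

Lemma refine (C : eqType) (relabel : C -> seq C -> C)
  (rinj : relabel_injective relabel) n (adjs : bool -> rel 'I_n)
  (iF i1 : bool -> 'I_n -> C)
  (H0 : forall b v b' v', iF b v = iF b' v' -> i1 b v = i1 b' v') t :
  forall b v b' v', wl relabel (adjs b) (iF b) t v = wl relabel (adjs b') (iF b') t v' ->
    wl relabel (adjs b) (i1 b) t v = wl relabel (adjs b') (i1 b') t v'.
Proof.
elim: t => [|t IH] b v b' v' /=; first exact: H0.
move/eqP; rewrite rinj => /andP[/eqP ex ps].
have [g Hg] := @factor (bool * 'I_n)%type C
  (fun x => wl relabel (adjs x.1) (iF x.1) t x.2)
  (fun x => wl relabel (adjs x.1) (i1 x.1) t x.2)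
  (fun x y => IH x.1 x.2 y.1 y.2).
apply/eqP; rewrite rinj (IH _ _ _ _ ex) eqxx /=.
have m1 : forall bb vv, [seq wl relabel (adjs bb) (i1 bb) t u | u <- enum 'I_n & adjs bb vv u]
   = map g [seq wl relabel (adjs bb) (iF bb) t u | u <- enum 'I_n & adjs bb vv u].
  by move=> bb vv; rewrite -map_comp; apply: eq_map => u /=; exact: (Hg (bb, u)).
by rewrite !m1 perm_map.
Qed.

Lemma dst_sum (I : Type) (r : seq I) (x y : I -> nat) :
  dst (\sum_(i <- r) x i) (\sum_(i <- r) y i) <= \sum_(i <- r) dst (x i) (y i).
Proof.
rewrite /dst; elim: r => [|i r IH]; first by rewrite !big_nil.
rewrite !big_cons; lia.
Qed.

Lemma sum_eq_le1 (C : eqType) (s : seq C) (x : C) :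
  uniq s -> \sum_(c <- s) (x == c : nat) <= 1.
Proof.
move=> us; have -> : \sum_(c <- s) (x == c : nat) = count_mem x s.
  by elim: s {us} => [|c s IH]; rewrite ?big_nil ?big_cons //= IH eq_sym.
by rewrite count_uniq_mem //; case: (x \in s).
Qed.

Lemma cnt_decomp (C : eqType) n (f : 'I_n -> C) (g : C -> C) (S : seq C) c :
  uniq S -> (forall v, f v \in S) ->
  #|[set v | g (f v) == c]| = \sum_(d <- S) (g d == c) * #|[set v | f v == d]|.
Proof.
move=> uS fS.
have cardE' : forall P : pred 'I_n, #|[set v | P v]| = \sum_v (P v : nat).
  move=> P; rewrite cardsE -sum1_card big_mkcond /=; apply: eq_bigr => v _.
  by rewrite -topredE /=; case: (P v).
under eq_bigr => d _ do rewrite (cardE' (fun v => f v == d)) big_distrr /=.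
rewrite (cardE' (fun v => g (f v) == c)).
rewrite exchange_big /=; apply: eq_bigr => v _.
rewrite (bigD1_seq (f v)) //= eqxx muln1 big1_seq ?addn0 // => d /andP[/negbTE ne _].
by rewrite [f v == d]eq_sym ne muln0.
Qed.

Lemma count_step (C : eqType) n (AG AH FG FH : 'I_n -> C) (g : C -> C)
  (hG : forall v, AG v = g (FG v)) (hH : forall v, AH v = g (FH v)) :
  \sum_(c <- undup ([seq AG v | v <- enum 'I_n] ++ [seq AH v | v <- enum 'I_n]))
     dst #|[set v | AG v == c]| #|[set v | AH v == c]|
  <= \sum_(d <- undup ([seq FG v | v <- enum 'I_n] ++ [seq FH v | v <- enum 'I_n]))
     dst #|[set v | FG v == d]| #|[set v | FH v == d]|.
Proof.
set S1 := undup _; set SF := undup _.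
have uSF : uniq SF by apply: undup_uniq.
have uS1 : uniq S1 by apply: undup_uniq.
have FGS : forall v, FG v \in SF by move=> v; rewrite mem_undup mem_cat map_f ?mem_enum.
have FHS : forall v, FH v \in SF by move=> v; rewrite mem_undup mem_cat map_f ?mem_enum ?orbT.
have eG : forall c, #|[set v | AG v == c]| = #|[set v | g (FG v) == c]|.
  by move=> c; apply: eq_card => v; rewrite !inE hG.
have eH : forall c, #|[set v | AH v == c]| = #|[set v | g (FH v) == c]|.
  by move=> c; apply: eq_card => v; rewrite !inE hH.
apply: (@leq_trans (\sum_(c <- S1) \sum_(d <- SF) (g d == c) * dst #|[set v | FG v == d]| #|[set v | FH v == d]|)).
  apply: leq_sum => c _; rewrite eG eH (@cnt_decomp _ _ FG g SF c uSF FGS) (@cnt_decomp _ _ FH g SF c uSF FHS).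
  apply: (leq_trans (dst_sum _ _ _ _)); apply: leq_sum => d _.
  by rewrite /dst mulnDr !mulnBr.
rewrite exchange_big /=; apply: leq_sum => d _.
rewrite -big_distrl /= -{2}(mul1n (dst _ _)); apply: leq_mul => //.
exact: sum_eq_le1.
Qed.

Lemma iota_count (a b n : nat) :
  \sum_(j <- iota 1 n) ((j <= a) != (j <= b) : nat) = dst (minn a n) (minn b n).
Proof.
rewrite /dst; elim: n => [|n IH]; first by rewrite big_nil minn0.
rewrite -[n.+1]addn1 iotaD big_cat /= big_cons big_nil IH.
case: (leqP (1 + n) a) => h1; case: (leqP (1 + n) b) => h2 /=; lia.
Qed.

Lemma dist_formula (R : rcfType) (C : eqType) n (colG colH : nat -> 'I_n -> C) T :
  (\sum_(x <- wloa_index colG colH T) (wloa R colG x - wloa R colH x) ^+ 2)%R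
  = ((\sum_(t <- iota 0 T.+1) \sum_(c <- Sigma colG colH t)
       dst (phi_count colG t c) (phi_count colH t c))%N)%:R%R.
Proof.
rewrite /wloa_index big_flatten big_map natr_sum; apply: eq_bigr => t _.
rewrite big_allpairs_dep natr_sum; apply: eq_bigr => c _.
have le1 : forall col : nat -> 'I_n -> C, phi_count col t c <= n.
  by move=> col; rewrite /phi_count; apply: leq_trans (max_card _) _; rewrite card_ord.
rewrite -(minn_idPl (le1 colG)) -(minn_idPl (le1 colH)) -iota_count natr_sum.
apply: eq_bigr => j _; rewrite /wloa /=.
case: (j <= phi_count colG t c)%N; case: (j <= phi_count colH t c)%N => /=;
  by rewrite ?subr0 ?sub0r ?subrr ?expr0n ?sqrrN ?expr1n.
Qed.

Theorem proposition16
  (R : rcfType) (C : eqType) (c0 : C) (emb : seq bool -> C)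
  (relabel : C -> seq C -> C)
  (emb_inj : injective emb) (relabel_inj : relabel_injective relabel)
  (Fs : seq graph) (T n : nat) (adjG adjH : rel 'I_n)
  (symG : symmetric adjG) (irrG : irreflexive adjG)
  (symH : symmetric adjH) (irrH : irreflexive adjH) :
  (wloa_dist R (wl1 c0 relabel adjG) (wl1 c0 relabel adjH) T
    <= wloa_dist R (wlF emb relabel Fs adjG) (wlF emb relabel Fs adjH) T)%R.
Proof.
rewrite /wloa_dist !dist_formula ler_sqrt ?ler0n // ler_nat.
apply: leq_sum => t _.
pose adjs := fun b : bool => if b then adjG else adjH.
pose iF := fun (b : bool) (v : 'I_n) => emb [seq ell (adjs b) F v | F <- Fs].
pose i1 := fun (b : bool) (v : 'I_n) => c0.
have ref := @refine C relabel relabel_inj n adjs iF i1 (fun _ _ _ _ _ => erefl) t.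
have [g Hg] := @factor (bool * 'I_n)%type C
  (fun x => wl relabel (adjs x.1) (iF x.1) t x.2)
  (fun x => wl relabel (adjs x.1) (i1 x.1) t x.2)
  (fun x y => ref x.1 x.2 y.1 y.2).
rewrite /Sigma /phi_count.
apply: (@count_step C n (wl1 c0 relabel adjG t) (wl1 c0 relabel adjH t)
   (wlF emb relabel Fs adjG t) (wlF emb relabel Fs adjH t) g).
- by move=> v; exact: (Hg (true, v)).
- by move=> v; exact: (Hg (false, v)).
Qed.
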